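(* Let $m,k,t$ be positive integers with $t<(m-1)/4$, let $C=\{2i\mid 2\leq i\leq t\}\cup\{1,2t+1\}$, and let $c(x)=1+\sum_{j\in C}(x^j+x^{m-j})\in\mathbb{F}_2[x]$. Then $\gcd(c(x^k),x^m-1)=1$ if and only if $\gcd(m,(2t+3)k)=\gcd(m,(2t-1)k)=\gcd(m,3k)=\gcd(m,k)$.
   Context: All polynomials are over $\mathbb{F}_2$. *)

(* Defs.v *)
From HB Require Import structures.
From mathcomp Require Import all_boot all_order all_algebra.
Set Implicit Arguments. Unset Strict Implicit. Unset Printing Implicit Defensive.
Import GRing.Theory.
Local Open Scope ring_scope.

(* The index set C = {2i | 2 <= i <= t} ∪ {1, 2t+1}, listed without repetition
   (for t >= 1 its elements are pairwise distinct). *)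
Definition Cset (t : nat) : seq nat :=
  [:: 1%N, (2 * t + 1)%N & [seq (2 * i)%N | i <- iota 2 (t - 1)]].

Definition cpoly (m t : nat) : {poly 'F_2} :=
  1 + \sum_(j <- Cset t) ('X^j + 'X^(m - j)).

(* Main.v *)
Require Import Defs.
From HB Require Import structures.
From mathcomp Require Import all_boot all_order all_algebra.
From mathcomp Require Import ring zify.
Import GRing.Theory.
Local Open Scope ring_scope.

Lemma dvd_Xn1 (R : idomainType) (u v : nat) :
  ('X^u - 1 : {poly R}) %| 'X^(u * v) - 1.
Proof. by rewrite exprM (subrX1 (GRing.exp 'X u)) dvdp_mulr. Qed.

Lemma dvd_Xn1_dvdn (R : idomainType) (u w : nat) : (u %| w)%N ->
  ('X^u - 1 : {poly R}) %| 'X^w - 1.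
Proof. by move/dvdnP=> [q ->]; rewrite mulnC dvd_Xn1. Qed.

Lemma dvd_Xn1_gcd (R : idomainType) (d : {poly R}) (u v : nat) : (0 < u)%N ->
  d %| 'X^u - 1 -> d %| 'X^v - 1 -> d %| 'X^(gcdn u v) - 1.
Proof.
move=> u0 du dv; have [a _ /dvdnP [q hq]] := Bezoutl v u0.
have h1 : d %| 'X^(q * u) - 1 by rewrite mulnC (dvdp_trans du) ?dvd_Xn1.
have h2 : d %| 'X^(a * v) - 1 by rewrite mulnC (dvdp_trans dv) ?dvd_Xn1.
move: h1; rewrite -hq exprD.
have -> : 'X^(gcdn u v) * 'X^(a * v) - 1 =
  'X^(gcdn u v) * ('X^(a * v) - 1) + ('X^(gcdn u v) - 1) :> {poly R} by ring.
by rewrite dvdp_addr // dvdp_mull.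
Qed.

Lemma dvdp_big (R : idomainType) (I : Type) (s : seq I) (F : I -> {poly R}) (d : {poly R}) :
  (forall i, d %| F i) -> d %| \sum_(i <- s) F i.
Proof.
move=> H; apply: (big_ind (fun x => d %| x)); first exact: dvdp0.
  by move=> ? ? ? ?; rewrite dvdp_add.
by move=> i _; apply: H.
Qed.

Lemma coprime_congr (R : idomainType) (p q M : {poly R}) : M %| p - q ->
  coprimep p M -> coprimep q M.
Proof.
move=> hM /coprimepP cp; apply/coprimepP => d dq dM; apply: cp => //.
have -> : p = q + (p - q) by ring.
by rewrite dvdp_add // (dvdp_trans dM).
Qed.

Lemma gen_id (R : comNzRingType) (x z G : R) : (2%:R : R) = 0 ->
  (x^+2 - 1) * G = z - 1 ->
  (x^+3*z + x^+4*z + x^+2*z + x^+6*z^+2 + 1 + (x^+7*z + x)*G) * (x-1)^+3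
  = (x^+5*z - 1)*(x*z - 1)*(x^+3 - 1).
Proof.
move=> two rel; apply/eqP; rewrite -subr_eq0.
have -> : (x^+3*z + x^+4*z + x^+2*z + x^+6*z^+2 + 1 + (x^+7*z + x)*G) * (x-1)^+3
  - (x^+5*z - 1)*(x*z - 1)*(x^+3 - 1) =
  (x^+7*z + x)*(x-1)*((x^+2 - 1) * G - (z - 1)) + 2%:R * ((2%:R)*x^+1*z^+0*G^+0 + -(1%:R)*x^+1*z^+0*G^+1 + -(1%:R)*x^+1*z^+1*G^+0 + -(2%:R)*x^+2*z^+0*G^+0 + (2%:R)*x^+2*z^+0*G^+1 + -(1%:R)*x^+3*z^+0*G^+1 + (1%:R)*x^+3*z^+1*G^+0 + -(1%:R)*x^+6*z^+1*G^+0 + (1%:R)*x^+7*z^+1*G^+0 + -(1%:R)*x^+7*z^+1*G^+1 + (1%:R)*x^+7*z^+2*G^+0 + (2%:R)*x^+8*z^+1*G^+1 + -(1%:R)*x^+8*z^+2*G^+0 + -(1%:R)*x^+9*z^+1*G^+1) by ring.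
by rewrite rel subrr mulr0 two mul0r addr0.
Qed.

Definition Tp (t : nat) : {poly 'F_2} :=
  'X^(2*t+1) + \sum_(j <- Cset t) ('X^(2*t+1+j) + 'X^(2*t+1-j)).

Lemma Xe (R : nzRingType) (n a b : nat) : n = (a + b)%N -> ('X^n : {poly R}) = 'X^a * 'X^b.
Proof. by move=> ->; rewrite exprD. Qed.

Lemma Tp_dec s : Tp s.+1 =
  'X^3*'X^(2*s) + 'X^4*'X^(2*s) + 'X^2*'X^(2*s) + 'X^6*('X^(2*s))^+2 + 1
  + ('X^7*'X^(2*s) + 'X)*(\sum_(i < s) ('X^2)^+i).
Proof.
rewrite /Tp /Cset !big_cons big_map.
have -> : iota 2 (s.+1 - 1) = map (addn 2) (index_iota 0 s).
  by rewrite /index_iota subn0 -iotaDl subn1.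
rewrite big_map big_mkord big_split /=.
have -> : \sum_(i < s) 'X^(2 * s.+1 + 1 + 2 * (2 + i)) =
   ('X^7*'X^(2*s)) * \sum_(i < s) ('X^2)^+i :> {poly 'F_2}.
  rewrite mulr_sumr; apply: eq_bigr => i _; rewrite -exprM -!exprD; congr ('X^_); lia.
have -> : \sum_(i < s) 'X^(2 * s.+1 + 1 - 2 * (2 + i)) =
   'X * \sum_(i < s) ('X^2)^+i :> {poly 'F_2}.
  rewrite mulr_sumr (reindex_inj rev_ord_inj) /=; apply: eq_bigr => i _.
  rewrite -exprM -exprS; congr ('X^_); have := ltn_ord i; lia.
rewrite (@Xe _ (2 * s.+1 + 1) 3 (2*s)); last lia.
rewrite (@Xe _ (2 * s.+1 + 1 + 1) 4 (2*s)); last lia.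
rewrite (@Xe _ (2 * s.+1 + 1 - 1) 2 (2*s)); last lia.
rewrite (@Xe _ (2 * s.+1 + 1 + (2 * s.+1 + 1)) 6 (2*s + 2*s)); last lia.
rewrite (@Xe _ (2*s + 2*s) (2*s) (2*s)) // subnn expr0 -expr2.
by ring.
Qed.

Lemma F2two : (2%:R : 'F_2) = 0.
Proof. by apply/eqP. Qed.

Lemma P2two : (2%:R : {poly 'F_2}) = 0.
Proof. by rewrite -polyC_natr F2two. Qed.

Lemma Tp_id t : (0 < t)%N -> Tp t * ('X - 1)^+3 =
  ('X^((2*t+3)) - 1)*('X^(2*t-1) - 1)*('X^3 - 1).
Proof.
case: t => // s _; rewrite Tp_dec (gen_id _ _ _ _ P2two); last by rewrite -subrX1 -exprM.
rewrite (@Xe _ (2 * s.+1 + 3) 5 (2*s)); last lia.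
rewrite (@Xe _ (2 * s.+1 - 1) 1 (2*s)); last lia.
by rewrite expr1.
Qed.

Lemma Tp_one t : (0 < t)%N -> ('X - 1) %| Tp t - 1.
Proof.
case: t => // s _; rewrite -polyC1 dvdp_XsubCl /root Tp_dec.
rewrite !(hornerE, hornerXn, expr1n, mulr1, mul1r).
have h : forall y : 'F_2, 1+1+1+1+1+(1+1)*y - 1 = 0.
  move=> y; have -> : 1+1+1+1+1+(1+1)*y - 1 = 2%:R * (2%:R + y) :> 'F_2 by ring.
  by rewrite F2two mul0r.
by rewrite h.
Qed.

Lemma dvdp_bigP (R : idomainType) (I : Type) (s : seq I) (P : pred I)
  (F : I -> {poly R}) (d : {poly R}) :
  (forall i, P i -> d %| F i) -> d %| \sum_(i <- s | P i) F i.
Proof.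
move=> H; apply: (big_ind (fun x => d %| x)); first exact: dvdp0.
  by move=> ? ? ? ?; rewrite dvdp_add.
exact: H.
Qed.

Lemma comp_sum (s : seq nat) (F : nat -> {poly 'F_2}) q :
  (\sum_(j <- s) F j) \Po q = \sum_(j <- s) (F j \Po q).
Proof.
elim: s => [|j s IH]; first by rewrite !big_nil comp_poly0.
by rewrite !big_cons comp_polyD IH.
Qed.

Lemma comp_powX (p q : {poly 'F_2}) n : (p ^+ n) \Po q = (p \Po q) ^+ n.
Proof.
elim: n => [|n IH]; first by rewrite !expr0 (comp_poly_multiplicative q).2.
by rewrite !exprS comp_polyM IH.
Qed.

Lemma Cset_le t j : j \in Cset t -> (j <= 2 * t + 1)%N.
Proof.
rewrite /Cset !inE => /orP [/eqP->|/orP [/eqP->|/mapP [i]]]; try lia.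
rewrite mem_iota => /andP [h1 h2] ->; lia.
Qed.

Lemma congr_c m t k : (2 * t + 1 < m)%N ->
  ('X^m - 1) %| 'X^((2 * t + 1) * k) * (cpoly m t \Po 'X^k) - (Tp t \Po 'X^k).
Proof.
move=> htm; rewrite /cpoly /Tp !comp_polyD !comp_sum (comp_poly_multiplicative _).2.
rewrite mulrDr mulr_sumr opprD addrACA -sumrB.
rewrite dvdp_add //.
  by rewrite comp_Xn_poly -exprM mulr1 mulnC subrr dvdp0.
rewrite big_seq; apply: dvdp_bigP => j hj; have hj' := @Cset_le t j hj.
rewrite !comp_polyD !comp_Xn_poly -!exprM mulrDr -!exprD.
have -> : ((2 * t + 1) * k + k * j = k * (2 * t + 1 + j))%N by nia.
have -> : ((2 * t + 1) * k + k * (m - j) = k * (2 * t + 1 - j) + k * m)%N by nia.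
rewrite exprD.
have -> : 'X^(k * (2 * t + 1 + j)) + 'X^(k * (2 * t + 1 - j)) * 'X^(k * m) -
    ('X^(k * (2 * t + 1 + j)) + 'X^(k * (2 * t + 1 - j))) =
    'X^(k * (2 * t + 1 - j)) * ('X^(k * m) - 1) :> {poly 'F_2} by ring.
by rewrite dvdp_mull // mulnC dvd_Xn1.
Qed.

Lemma dir_only (m k e : nat) (T' : {poly 'F_2}) : (0 < m)%N -> (0 < k)%N -> odd e ->
  ('X^(e * k) - 1) %| T' * ('X^k - 1) ^+ 3 -> coprimep T' ('X^m - 1) ->
  gcdn m (e * k) = gcdn m k.
Proof.
move=> m0 k0 oe hdiv cop.
set h := gcdn m (e * k); set g := gcdn m k.
have g0 : (0 < g)%N by rewrite gcdn_gt0 m0.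
have h0 : (0 < h)%N by rewrite gcdn_gt0 m0.
have gh : (g %| h)%N by rewrite dvdn_gcd dvdn_gcdl dvdn_mull ?dvdn_gcdr.
have heg : (h %| e * g)%N.
  by rewrite /g muln_gcdr dvdn_gcd dvdn_mull ?dvdn_gcdl ?dvdn_gcdr.
set r := (h %/ g)%N.
have hr : h = (r * g)%N by rewrite divnK.
have re : (r %| e)%N by rewrite dvdn_divLR // mulnC.
have ro : odd r := dvdn_odd re oe.
apply/eqP; apply/negPn/negP => hneq.
pose Q : {poly 'F_2} := \sum_(i < r) ('X^g) ^+ i.
have hQ : 'X^h - 1 = ('X^g - 1) * Q by rewrite hr mulnC exprM subrX1.
have hQ1 : ('X^g - 1) %| Q - 1.
  have r1 : (r%:R : {poly 'F_2}) = 1.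
    by rewrite -(odd_double_half r) ro natrD -muln2 natrM P2two mulr0 addr0.
  have -> : Q - 1 = \sum_(i < r) (('X^g) ^+ i - 1).
    by rewrite sumrB sumr_const card_ord r1.
  rewrite big_seq; apply: dvdp_bigP => i _.
  by rewrite (subrX1 (GRing.exp 'X g)) dvdp_mulr.
have copQ : coprimep Q ('X^k - 1).
  apply/coprimepP => d dQ dK.
  have dh : d %| 'X^h - 1 by rewrite hQ dvdp_mull.
  have := (@dvd_Xn1_gcd _ _ _ _ h0) dh dK.
  have -> : gcdn h k = g.
    by rewrite /h -gcdnA; congr gcdn; apply/gcdn_idPr; rewrite dvdn_mull.
  move=> dg; rewrite -size_poly_eq1 -dvdp1.
  have -> : (1 : {poly 'F_2}) = Q - (Q - 1) by ring.
  by rewrite dvdp_sub // (dvdp_trans dg hQ1).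
have Qh : Q %| 'X^h - 1 by rewrite hQ dvdp_mull.
have QT : Q %| T'.
  rewrite -(Gauss_dvdpl _ (coprimep_expr 3 copQ)).
  apply: dvdp_trans hdiv; apply: (dvdp_trans Qh).
  by rewrite dvd_Xn1_dvdn // dvdn_gcdr.
have QM : Q %| 'X^m - 1.
  by apply: (dvdp_trans Qh); rewrite dvd_Xn1_dvdn // dvdn_gcdl.
have := (coprimepP _ _ cop) Q QT QM; rewrite -size_poly_eq1 => /eqP sQ.
have Xg0 : ('X^g - 1 : {poly 'F_2}) != 0.
  by rewrite -size_poly_eq0 size_Xn_sub_1.
have Q0 : Q != 0 by rewrite -size_poly_eq0 sQ.
move: (congr1 (fun p : {poly 'F_2} => size p) hQ) => /=; rewrite size_mul // sQ !size_Xn_sub_1 // addn1 /=.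
by move=> [] hg; rewrite hg eqxx in hneq.
Qed.

Lemma dir_if (m k a b c : nat) (T' : {poly 'F_2}) : (0 < m)%N ->
  (forall d, d %| T' -> d %| 'X^k - 1 -> d %= 1) ->
  T' * ('X^k - 1) ^+ 3 = ('X^(a * k) - 1) * ('X^(b * k) - 1) * ('X^(c * k) - 1) ->
  gcdn m (a * k) = gcdn m k -> gcdn m (b * k) = gcdn m k ->
  gcdn m (c * k) = gcdn m k -> coprimep T' ('X^m - 1).
Proof.
move=> m0 L1 hid ha hb hc.
have cop e : gcdn m (e * k) = gcdn m k -> forall d, d %| T' -> d %| 'X^m - 1 ->
    coprimep d ('X^(e * k) - 1).
  move=> he d dT dM; apply/coprimepP => d' d'd d'E; apply: L1.
    exact: dvdp_trans d'd dT.
  have := (@dvd_Xn1_gcd _ _ _ _ m0) (dvdp_trans d'd dM) d'E; rewrite he => h1.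
  by apply: (dvdp_trans h1); rewrite dvd_Xn1_dvdn // dvdn_gcdr.
apply/coprimepP => d dT dM.
have dP : d %| ('X^(a * k) - 1) * ('X^(b * k) - 1) * ('X^(c * k) - 1).
  by rewrite -hid dvdp_mulr.
have : coprimep d (('X^(a * k) - 1) * ('X^(b * k) - 1) * ('X^(c * k) - 1)).
  by rewrite !coprimepMr !cop.
by move/coprimepP => /(_ d (dvdpp d) dP).
Qed.

Theorem proposition10 (m k t : nat) (hm : (0 < m)%N) (hk : (0 < k)%N)
  (ht : (0 < t)%N) (htm : (4 * t + 1 < m)%N) :
  coprimep (cpoly m t \Po 'X^k) ('X^m - 1) <->
  [/\ gcdn m ((2 * t + 3) * k) = gcdn m k,
      gcdn m ((2 * t - 1) * k) = gcdn m k &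
      gcdn m (3 * k) = gcdn m k].
Proof.
set T' := Tp t \Po 'X^k.
have hid : T' * ('X^k - 1) ^+ 3 =
    ('X^((2 * t + 3) * k) - 1) * ('X^((2 * t - 1) * k) - 1) * ('X^(3 * k) - 1).
  have := congr1 (comp_poly 'X^k) (@Tp_id t ht).
  rewrite !comp_polyM !comp_polyB !comp_Xn_poly comp_polyX.
  rewrite !(comp_poly_multiplicative _).2 -!exprM => e.
  rewrite ![(_ * k)%N]mulnC; exact: e.
have hone : forall d, d %| T' -> d %| 'X^k - 1 -> d %= 1.
  have [q hq] : exists q, Tp t - 1 = q * ('X - 1) by apply/dvdpP; exact: (@Tp_one t ht).
  have := congr1 (comp_poly 'X^k) hq.
  rewrite comp_polyB comp_polyM comp_polyB comp_polyX !(comp_poly_multiplicative _).2.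
  move=> hq' d dT dK; rewrite -size_poly_eq1 -dvdp1.
  have -> : (1 : {poly 'F_2}) = T' - (T' - 1) by ring.
  by rewrite /T' hq' dvdp_sub // dvdp_mull.
have equiv : coprimep (cpoly m t \Po 'X^k) ('X^m - 1) <-> coprimep T' ('X^m - 1).
  have cX : coprimep ('X^((2 * t + 1) * k)) ('X^m - 1 : {poly 'F_2}).
    apply: coprimep_expl; rewrite coprimep_sym.
    have := coprimep_XsubC ('X^m - 1 : {poly 'F_2}) 0; rewrite polyC0 subr0 => ->.
    by rewrite /root !hornerE expr0n eqn0Ngt hm.
  have hc := @congr_c m t k ltac:(lia).
  split => H.
  - by apply: (@coprime_congr _ _ _ _ hc); rewrite coprimepMl cX H.
  - have : coprimep ('X^((2 * t + 1) * k) * (cpoly m t \Po 'X^k)) ('X^m - 1).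
      by apply: (@coprime_congr _ _ _ _ _ H); rewrite -(opprB (_ * _)) dvdpNr.
    by rewrite coprimepMl => /andP [].
split.
- move=> /equiv H; split; apply: (@dir_only m k _ T' hm hk _ _ H).
  + by rewrite oddD oddM.
  + by rewrite hid -mulrA dvdp_mulr.
  + rewrite (_ : (2 * t - 1 = (t - 1).*2.+1)%N); last by rewrite -muln2; lia.
    by rewrite /= odd_double.
  + by rewrite hid mulrAC dvdp_mull.
  + by [].
  + by rewrite hid dvdp_mull.
- by case => ha hb hc; apply/equiv; apply: (@dir_if m k _ _ _ T' hm hone hid ha hb hc).
Qed.
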